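(* Let $\Pi$ be a clingcon program with CSP $(V,D,C)$, let $\mathbf{p}$ be the set of all propositional constants occurring in $\Pi$, and let $I=\langle I^f,X\rangle$ be an interpretation of the signature $V\cup\mathbf{p}$. Then $X$ is a constraint answer set of $\Pi$ relative to $I^f$ if and only if $I\models_{bg}\mathrm{SM}[\Pi;\mathbf{p}]$, where $\Pi$ is identified with the conjunction of the formulas $B\land N\land \mathit{Cn}\rightarrow a$ over all its rules.
   Context: Formulas are (possibly many-sorted) first-order formulas built from $\bot,\land,\lor,\rightarrow,\forall,\exists$; $\neg F$ abbreviates $F\rightarrow\bot$, $\top$ abbreviates $\neg\bot$. Stable model operator. For predicate symbols $u,c$ of the same arity, $u\le c$ denotes $\forall\mathbf{x}(u(\mathbf{x})\rightarrow c(\mathbf{x}))$; $u=c$ denotes $\forall\mathbf{x}(u(\mathbf{x})\leftrightarrow c(\mathbf{x}))$ if $u,c$ are predicate symbols and $\forall\mathbf{x}(u(\mathbf{x})=c(\mathbf{x}))$ if they are function symbols; for lists these are conjunctions of the componentwise expressions. Let $\mathbf{c}$ be a list of distinct predicate and function constants and $\widehat{\mathbf{c}}$ a list of distinct predicate and function variables corresponding to $\mathbf{c}$. Write $\mathbf{c}^{pred}$, $\widehat{\mathbf{c}}^{pred}$ for the sublists of predicate symbols. $\widehat{\mathbf{c}}<\mathbf{c}$ abbreviates $(\widehat{\mathbf{c}}^{pred}\le\mathbf{c}^{pred})\land\neg(\widehat{\mathbf{c}}=\mathbf{c})$. For a formula $F$, $F^*(\widehat{\mathbf{c}})$ is defined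 recursively: if $F$ is atomic (including $\bot$), $F^*=F'\land F$ where $F'$ is obtained from $F$ by replacing every intensional constant from $\mathbf{c}$ by the corresponding variable from $\widehat{\mathbf{c}}$; $(G\land H)^*=G^*\land H^*$; $(G\lor H)^*=G^*\lor H^*$; $(G\rightarrow H)^*=(G^*\rightarrow H^* )\land(G\rightarrow H)$; $(\forall xG)^*=\forall xG^*$; $(\exists xG)^*=\exists xG^*$. Then $\mathrm{SM}[F;\mathbf{c}]$ is the second-order formula $F\land\neg\exists\widehat{\mathbf{c}}(\widehat{\mathbf{c}}<\mathbf{c}\land F^*(\widehat{\mathbf{c}}))$. Background theory. Let $\sigma^{bg}$ be the (many-sorted) signature of a background theory $bg$; an interpretation of $\sigma^{bg}$ satisfying $bg$ is a background interpretation. For a signature $\sigma$ disjoint from $\sigma^{bg}$, an interpretation $I$ of $\sigma$ satisfies a (possibly second-order) sentence $F$ w.r.t. $bg$, written $I\models_{bg}F$, if there is a background interpretation $J$ of $\sigma^{bg}$ with the same universe as $I$ such that $I\cup J\models F$. Clingcon programs. A CSP is a tuple $(V,D,C)$ of constraint variables $V$, their domains $D$, and constraints $C$. Constraint variables are identified with object constants whose value sorts are the corresponding domains; $\sigma^{bg}$ is disjoint from $V$, contains all domain values as object constants and the symbols (such as $+,\times,\ge$) used in constraints; each constraint is a sentence $F(v_1,\dots,v_n)$ of signature $V\cup\sigma^{bg}$ obtained from a formula $F(x_1,\dots,x_n)$ of $\sigma^{bg}$ by substituting constants $v_i\in V$ for the variables $x_i$. A clingcon program $\Pi$ with CSP $(V,D,C)$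 is a set of rules $a\leftarrow B,N,\mathit{Cn}$ where $a$ is a propositional atom or $\bot$, $B$ is a set of propositional atoms, $N$ is a set of negative propositional literals $\mathit{not}\ c$, and $\mathit{Cn}$ is a set of constraints from $C$, each possibly preceded by $\mathit{not}$; as a formula, commas are conjunctions and $\mathit{not}$ is $\neg$. For a signature of object constants and propositional constants, an interpretation $I$ is identified with $\langle I^f,X\rangle$, where $I^f$ is the restriction of $I$ to the object constants and $X$ is the set of propositional constants true in $I$. The constraint reduct $\Pi^X_{I^f}$ is the set of rules $a\leftarrow B$ for each rule $a\leftarrow B,N,\mathit{Cn}$ of $\Pi$ such that $I^f\models_{bg}\mathit{Cn}$ (every constraint in $\mathit{Cn}$ not preceded by $\mathit{not}$ holds and every one preceded by $\mathit{not}$ fails) and $X\models N$. $X$ is a constraint answer set of $\Pi$ relative to $I^f$ if $X$ is a minimal model of $\Pi^X_{I^f}$ (rules with head $\bot$ act as constraints).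
   Formalization: Some background interpretation has the same universe as I, and all background interpretations with that universe agree on the truth of every constraint in C. The statement above fails without it. *)

(* Defs.v *)
From Stdlib Require List.
From mathcomp Require Import all_boot.
Set Implicit Arguments.
Unset Strict Implicit.
Unset Printing Implicit Defensive.

(* Syntax.  A : propositional constants, C : constraints of the CSP.   *)
(* FVar a is the propositional (0-ary predicate) variable \hat a       *)
(* corresponding to the constant a.  Constraints are sentences of      *)
(* V \cup sigma^bg; they contain no propositional constants, and are   *)
(* treated as (opaque) subformulas whose truth is given semantically   *)
(* by I^f \cup J.                                                     *)
Section Syntax.
Variables (A C : eqType).

Inductive form :=
  | FBot
  | FAtom of A
  | FVar of A
  | FCst of C
  | FAnd of form & form
  | FOr of form & form
  | FImp of form & form.

Definition FNeg (F : form) := FImp F FBot.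
Definition FTop := FNeg FBot.
Definition FConj (l : seq form) := foldr FAnd FTop l.

(* F^*(\hat p) for the list p of intensional (propositional) constants. *)
Fixpoint star (p : seq A) (F : form) : form :=
  match F with
  | FBot => FAnd FBot FBot
  | FAtom a => FAnd (if a \in p then FVar a else FAtom a) (FAtom a)
  | FVar a => FAnd (FVar a) (FVar a)
  | FCst c => FAnd (FCst c) (FCst c)   (* F' = F: no intensional constant *)
  | FAnd G H => FAnd (star p G) (star p H)
  | FOr G H => FOr (star p G) (star p H)
  | FImp G H => FAnd (FImp (star p G) (star p H)) (FImp G H)
  end.

(* Truth in an interpretation: X = true propositional constants,
   Y = values of the predicate variables \hat a, sc = truth of constraints
   in I^f \cup J. *)
Fixpoint eval (X Y : A -> Prop) (sc : C -> Prop) (F : form) : Prop :=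
  match F with
  | FBot => False
  | FAtom a => X a
  | FVar a => Y a
  | FCst c => sc c
  | FAnd G H => eval X Y sc G /\ eval X Y sc H
  | FOr G H => eval X Y sc G \/ eval X Y sc H
  | FImp G H => eval X Y sc G -> eval X Y sc H
  end.

(* SM[F; p] evaluated in I \cup J (second-order quantifier over \hat p). *)
Definition SM_holds (p : seq A) (F : form) (X : A -> Prop) (sc : C -> Prop) : Prop :=
  eval X X sc F /\
  ~ (exists Y : A -> Prop,
        ((forall a, a \in p -> Y a -> X a) /\ ~ (forall a, a \in p -> (Y a <-> X a)))
        /\ eval X Y sc (star p F)).

(* Clingcon rules  a <- B, N, Cn   (head None = bot;
   Cn = constraints cpos and  not c  for c in cneg). *)
Record rule := Rule {
  head : option A;
  pos  : seq A;
  neg  : seq A;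
  cpos : seq C;
  cneg : seq C }.

Definition program := seq rule.

Definition head_form (h : option A) : form :=
  if h is Some a then FAtom a else FBot.

Definition rule_form (r : rule) : form :=
  FImp (FConj (map FAtom (pos r) ++ map (fun a => FNeg (FAtom a)) (neg r)
               ++ map FCst (cpos r) ++ map (fun c => FNeg (FCst c)) (cneg r)))
       (head_form (head r)).

Definition prog_form (P : program) : form := FConj (map rule_form P).

Definition rule_atoms (r : rule) : seq A :=
  (if head r is Some a then [:: a] else [::]) ++ pos r ++ neg r.
Definition prog_atoms (P : program) : seq A := flatten (map rule_atoms P).

End Syntax.

(*  Fi : interpretations I^f of the constraint variables V (each with  *)
(*       its universe), Bg : interpretations J of sigma^bg,            *)
(*  bg_int J   : J satisfies bg (J is a background interpretation),    *)
(*  same_univ If J : J has the same universe as If,                    *)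
(*  satc If J c : If \cup J |= c.                                      *)
Section Background.
Variables (A C : eqType) (Fi Bg : Type)
  (bg_int : Bg -> Prop) (same_univ : Fi -> Bg -> Prop)
  (satc : Fi -> Bg -> C -> Prop).

Definition background_for (If : Fi) (J : Bg) : Prop := bg_int J /\ same_univ If J.

(* If (together with X) satisfies w.r.t. bg the sentence whose truth in
   I \cup J is  Phi (satc If J). *)
Definition sat_bg (If : Fi) (Phi : (C -> Prop) -> Prop) : Prop :=
  exists J, background_for If J /\ Phi (satc If J).

Definition cn_holds (If : Fi) (r : rule A C) : Prop :=
  sat_bg If (fun sc => (forall c, c \in cpos r -> sc c) /\
                       (forall c, c \in cneg r -> ~ sc c)).

(* the constraint reduct Pi^X_{I^f}, as a set of rules (head, body) *)
Definition reduct (P : program A C) (If : Fi) (X : A -> Prop)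
    (hb : option A * seq A) : Prop :=
  exists r, List.In r P /\ cn_holds If r /\ (forall a, a \in neg r -> ~ X a)
            /\ hb = (head r, pos r).

Definition is_model (Y : A -> Prop) (R : option A * seq A -> Prop) : Prop :=
  forall h B, R (h, B) -> (forall b, b \in B -> Y b) ->
    match h with Some a => Y a | None => False end.

Definition minimal_model (X : A -> Prop) (R : option A * seq A -> Prop) : Prop :=
  is_model X R /\
  forall Y : A -> Prop, (forall a, Y a -> X a) -> is_model Y R ->
    forall a, X a -> Y a.

Definition constraint_answer_set (P : program A C) (If : Fi) (X : A -> Prop) : Prop :=
  minimal_model X (reduct P If X).

End Background.

(* Main.v *)
Require Import Defs.
From mathcomp Require Import all_boot.
From Stdlib Require Import Classical.
Set Implicit Arguments.
Unset Strict Implicit.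

Section Aux.
Variables (A C : eqType).
Implicit Types (X Y : A -> Prop) (sc : C -> Prop) (p : seq A).

Lemma conj_cat X Y sc (l1 l2 : seq (form A C)) :
  eval X Y sc (FConj (l1 ++ l2)) <-> eval X Y sc (FConj l1) /\ eval X Y sc (FConj l2).
Proof. elim: l1 => [|f l IH] /=; first by tauto. rewrite IH; tauto. Qed.

Lemma sconj_cat X Y sc p (l1 l2 : seq (form A C)) :
  eval X Y sc (star p (FConj (l1 ++ l2))) <->
  eval X Y sc (star p (FConj l1)) /\ eval X Y sc (star p (FConj l2)).
Proof. elim: l1 => [|f l IH] /=; first by tauto. rewrite IH; tauto. Qed.

Lemma conj_map (T : eqType) X Y sc (g : T -> form A C) s :
  eval X Y sc (FConj (map g s)) <-> forall x, x \in s -> eval X Y sc (g x).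
Proof.
elim: s => [|y s IH] /=; first by split=> // _ x; rewrite in_nil.
rewrite IH; split.
- by move=> [H1 H2] x; rewrite in_cons => /orP [/eqP ->|]; auto.
- move=> H; split; first by apply: H; rewrite in_cons eqxx.
  by move=> x Hx; apply: H; rewrite in_cons Hx orbT.
Qed.

Lemma sconj_map (T : eqType) X Y sc p (g : T -> form A C) s :
  eval X Y sc (star p (FConj (map g s))) <-> forall x, x \in s -> eval X Y sc (star p (g x)).
Proof.
elim: s => [|y s IH] /=; first by split=> // _ x; rewrite in_nil.
rewrite IH; split.
- by move=> [H1 H2] x; rewrite in_cons => /orP [/eqP ->|]; auto.
- move=> H; split; first by apply: H; rewrite in_cons eqxx.
  by move=> x Hx; apply: H; rewrite in_cons Hx orbT.
Qed.

Lemma conj_mapL (T : Type) X Y sc (g : T -> form A C) s :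
  eval X Y sc (FConj (map g s)) <-> forall x, List.In x s -> eval X Y sc (g x).
Proof.
elim: s => [|y s IH] /=; first by split=> // _ x [].
rewrite IH; split.
- by move=> [H1 H2] x [<-|]; auto.
- move=> H; split; first by apply: H; left.
  by move=> x Hx; apply: H; right.
Qed.

Lemma sconj_mapL (T : Type) X Y sc p (g : T -> form A C) s :
  eval X Y sc (star p (FConj (map g s))) <-> forall x, List.In x s -> eval X Y sc (star p (g x)).
Proof.
elim: s => [|y s IH] /=; first by split=> // _ x [].
rewrite IH; split.
- by move=> [H1 H2] x [<-|]; auto.
- move=> H; split; first by apply: H; left.
  by move=> x Hx; apply: H; right.
Qed.

Definition Body (Z : A -> Prop) X sc (r : rule A C) :=
  (forall a, a \in pos r -> Z a) /\ (forall a, a \in neg r -> ~ X a) /\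
  (forall c, c \in cpos r -> sc c) /\ (forall c, c \in cneg r -> ~ sc c).

Definition Head (Z : A -> Prop) (h : option A) :=
  match h with Some a => Z a | None => False end.

Lemma body_eval X Y sc (r : rule A C) :
  eval X Y sc (FConj (map (@FAtom A C) (pos r) ++ map (fun a => FNeg (FAtom C a)) (neg r)
               ++ map (@FCst A C) (cpos r) ++ map (fun c => FNeg (FCst A c)) (cneg r)))
  <-> Body X X sc r.
Proof.
rewrite /Body !conj_cat !conj_map /=. tauto.
Qed.

Lemma body_star X Y sc p (r : rule A C) :
  (forall a, a \in pos r -> a \in p) ->
  eval X Y sc (star p (FConj (map (@FAtom A C) (pos r) ++ map (fun a => FNeg (FAtom C a)) (neg r)
               ++ map (@FCst A C) (cpos r) ++ map (fun c => FNeg (FCst A c)) (cneg r))))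
  <-> Body (fun a => Y a /\ X a) X sc r.
Proof.
move=> Hp.
rewrite /Body !sconj_cat !sconj_map /=.
split.
- move=> [H1 [H2 [H3 H4]]]; split; [|split; [|split]].
  + by move=> a Ha; move: (H1 a Ha); rewrite (Hp a Ha).
  + by move=> a Ha; case: (H2 a Ha).
  + by move=> c Hc; case: (H3 c Hc).
  + by move=> c Hc; case: (H4 c Hc).
- move=> [H1 [H2 [H3 H4]]]; split; [|split; [|split]].
  + by move=> a Ha; rewrite (Hp a Ha); apply: H1.
  + move=> a Ha; case: (a \in p) => /=; split=> [[_ ?]|?]; by case: (H2 a Ha).
  + by move=> c Hc; split; apply: H3.
  + by move=> c Hc; split=> [[? _]|?]; case: (H4 c Hc).
Qed.

Lemma rule_eval X Y sc (r : rule A C) :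
  eval X Y sc (rule_form r) <-> (Body X X sc r -> Head X (Defs.head r)).
Proof.
rewrite /rule_form /=. rewrite body_eval.
by case: (Defs.head r).
Qed.

Lemma rule_star X Y sc p (r : rule A C) :
  (forall a, a \in rule_atoms r -> a \in p) ->
  eval X Y sc (star p (rule_form r)) <->
  ((Body (fun a => Y a /\ X a) X sc r -> Head (fun a => Y a /\ X a) (Defs.head r)) /\
   (Body X X sc r -> Head X (Defs.head r))).
Proof.
move=> Hp.
have Hpos : forall a, a \in pos r -> a \in p.
  by move=> a Ha; apply: Hp; rewrite /rule_atoms !mem_cat Ha orbT.
rewrite /rule_form /=. rewrite body_star // body_eval.
move: Hp; rewrite /rule_atoms; case: (Defs.head r) => [a|] Hp /=.
- have -> : a \in p by apply: Hp; rewrite in_cons eqxx.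
  by [].
- tauto.
Qed.

Lemma atoms_in (P : program A C) r : List.In r P ->
  forall a, a \in rule_atoms r -> a \in prog_atoms P.
Proof.
elim: P => [|r' P IH] //= [<-|Hr] a Ha; rewrite /prog_atoms /= mem_cat.
- by rewrite Ha.
- by rewrite IH ?orbT.
Qed.

Lemma eval_ext X Y (sc1 sc2 : C -> Prop) (F : form A C) :
  (forall c, sc1 c <-> sc2 c) -> (eval X Y sc1 F <-> eval X Y sc2 F).
Proof.
  move=> H; elim: F => //= [G IG H' IH|G IG H' IH|G IG H' IH]; rewrite ?IG ?IH //.
Qed.

End Aux.

Theorem theorem3
  (A C : eqType) (Fi Bg : Type)
  (bg_int : Bg -> Prop) (same_univ : Fi -> Bg -> Prop)
  (satc : Fi -> Bg -> C -> Prop)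
  (P : program A C) (If : Fi) (X : A -> Prop)
  (* I = <If, X> interprets V \cup p, so X is a set of constants of p *)
  (HX : forall a, X a -> a \in prog_atoms P)
  (* standing reading: the universe of I admits a background interpretation,
     and the background interpretation is fixed (all of them agree on constraints) *)
  (Hex : exists J, background_for bg_int same_univ If J)
  (Hdet : forall J1 J2, background_for bg_int same_univ If J1 ->
            background_for bg_int same_univ If J2 ->
            forall c, satc If J1 c <-> satc If J2 c) :
  constraint_answer_set bg_int same_univ satc P If X <->
  sat_bg bg_int same_univ satc If
    (fun sc => SM_holds (prog_atoms P) (prog_form P) X sc).
Proof.
have [J0 HJ0] := Hex.
set sc0 := satc If J0.
set p := prog_atoms P.
have Hcn : forall r : rule A C, cn_holds bg_int same_univ satc If r <->
   ((forall c, c \in cpos r -> sc0 c) /\ (forall c, c \in cneg r -> ~ sc0 c)).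
  move=> r; split.
  - move=> [J [HJ [H1 H2]]]; split=> c Hc.
    + exact: (proj2 (Hdet _ _ HJ0 HJ c) (H1 c Hc)).
    + by move=> Hs; apply: (H2 c Hc); apply: (proj1 (Hdet _ _ HJ0 HJ c)).
  - by move=> H; exists J0.
have SMext : forall sc1 sc2 : C -> Prop, (forall c, sc1 c <-> sc2 c) ->
    SM_holds p (prog_form P) X sc1 -> SM_holds p (prog_form P) X sc2.
  move=> sc1 sc2 Hs [H1 H2]; split.
  - by apply/(eval_ext _ _ _ Hs).
  - move=> [Y [HY HE]]; apply: H2; exists Y; split=> //.
    by apply/(eval_ext _ _ _ Hs).
have Hsat : sat_bg bg_int same_univ satc If
    (fun sc => SM_holds p (prog_form P) X sc) <-> SM_holds p (prog_form P) X sc0.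
  split.
  - move=> [J [HJ HS]]; apply: SMext HS => c; exact: Hdet.
  - by move=> H; exists J0.
rewrite Hsat.
have HF : forall Z, eval X Z sc0 (prog_form P) <->
    forall r, List.In r P -> (Body X X sc0 r -> Head X (Defs.head r)).
  move=> Z; rewrite /prog_form conj_mapL; split=> H r Hr.
  - by apply/(rule_eval X Z); apply: H.
  - by apply/(rule_eval X Z); apply: H.
have HS : forall Y, eval X Y sc0 (star p (prog_form P)) <->
    forall r, List.In r P ->
     ((Body (fun a => Y a /\ X a) X sc0 r -> Head (fun a => Y a /\ X a) (Defs.head r)) /\
      (Body X X sc0 r -> Head X (Defs.head r))).
  move=> Y; rewrite /prog_form sconj_mapL; split=> H r Hr.
  - by apply/(rule_star X Y sc0 (atoms_in Hr)); apply: H.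
  - by apply/(rule_star X Y sc0 (atoms_in Hr)); apply: H.
have Hmod : forall Z, is_model Z (reduct bg_int same_univ satc P If X) <->
    forall r, List.In r P -> (forall c, c \in cpos r -> sc0 c) ->
      (forall c, c \in cneg r -> ~ sc0 c) -> (forall a, a \in neg r -> ~ X a) ->
      (forall a, a \in pos r -> Z a) -> Head Z (Defs.head r).
  move=> Z; split.
  - move=> H r Hr H1 H2 H3 H4.
    have := H (Defs.head r) (pos r); rewrite /Head; apply => //.
    by exists r; split=> //; split; [apply/Hcn|].
  - move=> H h B [r [Hr [Hc [Hn [= -> ->]]]]] HB.
    have [H1 H2] := (Hcn r).1 Hc.
    exact: H r Hr H1 H2 Hn HB.
rewrite /constraint_answer_set /minimal_model /SM_holds Hmod HF.
split.
- move=> [Hm Hmin]; split.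
  + by move=> r Hr [B1 [B2 [B3 B4]]]; apply: Hm.
  + move=> [Y [[HYX HYne] HE]]; apply: HYne.
    have Hsub : forall a, X a -> Y a /\ X a.
      apply: Hmin; first by move=> a [].
      apply/Hmod => r Hr H1 H2 H3 H4.
      have [Hr1 _] := (HS Y).1 HE r Hr.
      by apply: Hr1; split; [|split; [|split]].
    move=> a Ha; split; first exact: HYX.
    by move=> Hx; case: (Hsub a Hx).
- move=> [Hm Hns]; split.
  + by move=> r Hr H1 H2 H3 H4; apply: Hm => //.
  + move=> Y HYX HY a Xa; apply: NNPP => nYa; apply: Hns.
    exists Y; split; [split|].
    * by move=> b _; apply: HYX.
    * by move=> Hall; apply: nYa; apply/(Hall a (HX a Xa)).
    * apply/HS => r Hr; split.
      - move=> [B1 [B2 [B3 B4]]].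
        have Hh := (Hmod Y).1 HY r Hr B3 B4 B2 (fun a H => (B1 a H).1).
        move: Hh; rewrite /Head; case: (Defs.head r) => // b Hb; split=> //.
        exact: HYX.
      - by move=> HB; apply: Hm.
Qed.
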